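(* Let $V$ be an $n$-dimensional vector space over a field $\mathbb{F}$ with an alternating bilinear form $\mathsf{s}$ of maximal rank, $G=\mathrm{Sp}(V)$, and $C=\{C_i\}_{i\in I}$ a chamber of $\Gamma(V)$. For $J\subseteq I$ let $R_J$ be the residue of type $J$ on $C$ and $P_J=\mathrm{Stab}_G(R_J)$. Then $P_J$ acts flag-transitively on $R_J$.
   Context: $\mathrm{Sp}(V)$: linear automorphisms of $V$ preserving $\mathsf{s}$. $\mathrm{Rad}(U)=U\cap U^\perp$; maximal rank means $\dim\mathrm{Rad}(V)\le1$. $\Gamma(V)$: for $i\in I=\{1,\dots,n-1\}$ the objects of type $i$ are the $i$-dimensional subspaces $U$ with $U\cap\mathrm{Rad}(V)=0$ and $\dim\mathrm{Rad}(U)\le1$; $X,Y$ incident iff $X=Y$, or $X\subseteq Y$ with $X\cap\mathrm{Rad}(Y)=0$, or vice versa. A chamber is a set of pairwise incident objects, one of each type. The residue $R_J$ of type $J$ on $C$ is the pre-geometry induced on the objects incident to all $C_i$, $i\in I\setminus J$, and not among them (so $P_J$ equals the stabilizer of the flag $\{C_i\}_{i\in I\setminus J}$). Flag-transitive on $R_J$: for each $K\subseteq J$, transitive on the flags of $R_J$ of type $K$. *)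

(* Defs.v *)
From HB Require Import structures.
From mathcomp Require Import all_boot all_algebra.

Set Implicit Arguments.
Unset Strict Implicit.
Unset Printing Implicit Defensive.

Import GRing.Theory.
Local Open Scope ring_scope.

(* A bilinear form on V is encoded (curried) as a linear map
   s : V -> Hom(V, F), so that s u v is the value of the form on (u, v). *)

Section SymplecticGeometry.
Variables (F : fieldType) (V : vectType F).
Variable s : 'Hom(V, 'Hom(V, F^o)).

Definition alternating_form : Prop := forall u : V, s u u = 0.

Definition perp (U : {vspace V}) : {vspace V} :=
  (\bigcap_(u <- vbasis U) lker (s u))%VS.

Definition rad (U : {vspace V}) : {vspace V} := (U :&: perp U)%VS.

Definition maximal_rank : Prop := (\dim (rad fullv) <= 1)%N.

Definition in_Sp (g : 'End(V)) : Prop :=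
  limg g = fullv /\ forall u v : V, s (g u) (g v) = s u v.

(* objects of type i of Gamma(V) (i should lie in I = {1,...,n-1}) *)
Definition is_object (i : nat) (U : {vspace V}) : Prop :=
  \dim U = i /\ (U :&: rad fullv = 0)%VS /\ (\dim (rad U) <= 1)%N.

Definition incident (X Y : {vspace V}) : Prop :=
  X = Y \/ ((X <= Y)%VS /\ (X :&: rad Y = 0)%VS)
        \/ ((Y <= X)%VS /\ (Y :&: rad X = 0)%VS).

Definition in_I (n i : nat) : bool := (0 < i < n)%N.

Definition chamber (n : nat) (C : nat -> {vspace V}) : Prop :=
  (forall i, in_I n i -> is_object i (C i)) /\
  (forall i j, in_I n i -> in_I n j -> incident (C i) (C j)).

Definition residue_object (n : nat) (C : nat -> {vspace V}) (J : pred nat)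
    (X : {vspace V}) : Prop :=
  (exists i, in_I n i /\ is_object i X) /\
  (forall i, in_I n i -> ~~ J i -> incident X (C i) /\ X <> C i).

Definition residue_flag (n : nat) (C : nat -> {vspace V}) (J K : pred nat)
    (Fl : nat -> {vspace V}) : Prop :=
  (forall k, K k -> is_object k (Fl k) /\ residue_object n C J (Fl k)) /\
  (forall k l, K k -> K l -> incident (Fl k) (Fl l)).

(* P_J: the elements of Sp(V) stabilizing R_J, i.e. the stabilizer of the
   flag {C_i}_{i in I \ J} *)
Definition in_PJ (n : nat) (C : nat -> {vspace V}) (J : pred nat)
    (g : 'End(V)) : Prop :=
  in_Sp g /\ (forall i, in_I n i -> ~~ J i -> (g @: C i)%VS = C i).

Definition flag_transitive (n : nat) (C : nat -> {vspace V}) (J : pred nat)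
    : Prop :=
  forall K : pred nat, (forall k, K k -> J k) ->
  forall Fl1 Fl2 : nat -> {vspace V},
    residue_flag n C J K Fl1 -> residue_flag n C J K Fl2 ->
    exists g : 'End(V), in_PJ n C J g /\
      (forall k, K k -> (g @: Fl1 k)%VS = Fl2 k).

End SymplecticGeometry.

(* Main.v *)
Require Import Defs.
From HB Require Import structures.
From mathcomp Require Import all_boot all_algebra.
Set Implicit Arguments.
Unset Strict Implicit.
Unset Printing Implicit Defensive.
Import GRing.Theory.
Local Open Scope ring_scope.

Section Sym.
Variables (F : fieldType) (V : vectType F) (s : 'Hom(V, 'Hom(V, F^o))).
Hypothesis halt : alternating_form s.

Lemma sD1 u u' v : s (u + u') v = s u v + s u' v.
Proof. by rewrite linearD add_lfunE. Qed.
Lemma sZ1 a u v : s (a *: u) v = a * s u v.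
Proof. by rewrite linearZ scale_lfunE. Qed.
Lemma sD2 u v v' : s u (v + v') = s u v + s u v'.
Proof. by rewrite linearD. Qed.
Lemma sZ2 a u v : s u (a *: v) = a * s u v.
Proof. by rewrite linearZ. Qed.
Lemma s01 v : s 0 v = 0.
Proof. by rewrite linear0 zero_lfunE. Qed.
Lemma s02 v : s v 0 = 0.
Proof. by rewrite linear0. Qed.
Lemma sN1 u v : s (- u) v = - s u v.
Proof. by rewrite linearN opp_lfunE. Qed.
Lemma sN2 u v : s u (- v) = - s u v.
Proof. by rewrite linearN. Qed.
Lemma sB1 u u' v : s (u - u') v = s u v - s u' v.
Proof. by rewrite sD1 sN1. Qed.
Lemma sB2 u v v' : s u (v - v') = s u v - s u v'.
Proof. by rewrite sD2 sN2. Qed.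
Lemma ssum1 (I : Type) (r : seq I) (P : pred I) (f : I -> V) v :
  s (\sum_(i <- r | P i) f i) v = \sum_(i <- r | P i) s (f i) v.
Proof. by rewrite linear_sum sum_lfunE. Qed.
Lemma ssum2 (I : Type) (r : seq I) (P : pred I) (f : I -> V) u :
  s u (\sum_(i <- r | P i) f i) = \sum_(i <- r | P i) s u (f i).
Proof. by rewrite linear_sum. Qed.
Lemma santi u v : s u v = - s v u.
Proof.
have := halt (u + v); rewrite sD1 !sD2 !halt add0r addr0 => /eqP.
by rewrite addr_eq0 => /eqP.
Qed.
Lemma orth2 (X : seq V) v u : (forall x, x \in X -> s v x = 0) ->
  u \in <<X>>%VS -> s v u = 0.
Proof.
move=> H; have : (<<X>> <= lker (s v))%VS.
  by apply/span_subvP => x /H hx; rewrite memv_ker hx.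
by move/subvP => K /K; rewrite memv_ker => /eqP.
Qed.
Lemma orth1 (X : seq V) v u : (forall x, x \in X -> s x v = 0) ->
  u \in <<X>>%VS -> s u v = 0.
Proof.
move=> H uX; rewrite santi (@orth2 X) ?oppr0 // => x /H.
by rewrite santi => /eqP; rewrite oppr_eq0 => /eqP.
Qed.
Lemma memv_perp (U : {vspace V}) v : reflect (forall u, u \in U -> s u v = 0) (v \in perp s U).
Proof.
have H : forall l, (v \in \bigcap_(u <- l) lker (s u))%VS = all (fun u => s u v == 0) l.
  elim=> [|x l IH]; first by rewrite big_nil memvf.
  by rewrite big_cons memv_cap memv_ker IH.
rewrite /perp H; apply: (iffP allP) => [h u uU | h u /vbasis_mem /h -> //].
rewrite -(span_basis (vbasisP U)) in uU.
by apply: (orth1 _ uU) => x /h /eqP.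
Qed.
Lemma memv_rad (U : {vspace V}) v : reflect (v \in U /\ forall u, u \in U -> s u v = 0) (v \in Defs.rad s U).
Proof. by rewrite /Defs.rad memv_cap; apply: (iffP andP) => -[a /memv_perp b]; split. Qed.

Lemma perpE (U : {vspace V}) v :
  (v \in perp s U) = all (fun u => s u v == 0) (vbasis U).
Proof.
rewrite /perp; move: (tval (vbasis U)) => l.
elim: l => [|x l IH]; first by rewrite big_nil memvf.
by rewrite big_cons memv_cap memv_ker IH.
Qed.

Lemma not_rad (X : {vspace V}) r : r \in X -> r \notin Defs.rad s X ->
  exists2 u, u \in X & s u r != 0.
Proof.
move=> rX; rewrite /Defs.rad memv_cap rX /= perpE => /allPn [u uB hu].
by exists u => //; apply: vbasis_mem.
Qed.

Definition stdc (j i : nat) : F := if odd j then - (i == j.-1)%:R else (i == j.+1)%:R.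
Lemma oddP1 j : odd j.+1 = ~~ odd j. Proof. by []. Qed.
Lemma stdc_anti i j : stdc j i = - stdc i j.
Proof.
rewrite /stdc; case: (boolP (odd i)) => oi; case: (boolP (odd j)) => oj.
- have -> : (i == j.-1) = false.
    by apply/eqP => e; move: oi oj; rewrite e; case: j {e} => [|j] //=; case: (odd j).
  have -> : (j == i.-1) = false.
    by apply/eqP => e; move: oi oj; rewrite e; case: i {e} => [|i] //=; case: (odd i).
  by rewrite /= ?mulr0n ?oppr0.
- have [e|ne] := eqVneq i j.+1; first by rewrite e eqxx /= opprK.
  have -> : (j == i.-1) = false.
    by apply/eqP => e; move: ne; rewrite e; case: i oi {e} => [|i] //= _; rewrite eqxx.
  by rewrite /= ?mulr0n ?oppr0.
- have [e|ne] := eqVneq j i.+1; first by rewrite e /= eqxx.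
  have -> : (i == j.-1) = false.
    by apply/eqP => e; move: ne; rewrite e; case: j oj {e} => [|j] //= _; rewrite eqxx.
  by rewrite /= ?mulr0n ?oppr0.
- have -> : (i == j.+1) = false.
    by apply/eqP => e; move: oi; rewrite e /= oj.
  have -> : (j == i.+1) = false.
    by apply/eqP => e; move: oj; rewrite e /= oi.
  by rewrite /= ?mulr0n ?oppr0.
Qed.
Lemma stdc_diag i : stdc i i = 0.
Proof. 
rewrite /stdc; case: i => [|i] /=; first by [].
by case: (odd i) => /=; rewrite ?(ltn_eqF (ltnSn _)) ?(gtn_eqF (ltnSn _)) /= ?mulr0n ?oppr0.
Qed.
Lemma stdc_up m : odd m -> stdc m.-1 m = 1.
Proof. by case: m => [|m] //= om; rewrite /stdc /= (negbTE om) eqxx. Qed.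
Lemma stdc_low i m : (i < m.-1)%N -> stdc i m = 0.
Proof.
rewrite /stdc => h; case: (odd i).
  have -> : (m == i.-1) = false.
    apply/eqP => e; move: h; rewrite e; case: i {e} => [|i] //=.
    by rewrite ltnNge (leq_trans (leq_pred _)).
  by rewrite /= ?mulr0n ?oppr0.
have -> : (m == i.+1) = false by apply/eqP => e; move: h; rewrite e /= ltnn.
by [].
Qed.
Lemma stdc_even i m : (i < m)%N -> ~~ odd m -> stdc i m = 0.
Proof.
move=> h em; case: m h em => [|m] // h em.
have [e|ne] := eqVneq i m.
  rewrite /stdc e; case: (boolP (odd m)) => om; last by rewrite /= om in em.
  rewrite (_ : (m.+1 == m.-1) = false) ?oppr0 //.
  by apply/eqP => e2; move: (leq_pred m); rewrite -e2 ltnn.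
by apply: stdc_low; rewrite /= ltn_neqAle ne -ltnS.
Qed.

Lemma sum_stdc m (c : nat -> F) j : ~~ odd m -> (j < m)%N ->
  \sum_(i < m) c i * stdc j i = if odd j then - c j.-1 else c j.+1.
Proof.
move=> em jm.
have H : forall k, (k < m)%N -> \sum_(i < m) c i * (i == k :> nat)%:R = c k.
  move=> k km; have := big_ord1_eq (@GRing.add F) c k m; rewrite km => <-; rewrite [RHS]big_mkcond /=.
  apply: eq_bigr => i _; case: (_ == _) => /=; [exact: mulr1 | exact: mulr0].
rewrite /stdc.
case oj: (odd j).
  under eq_bigr => i _ do rewrite mulrN.
  by rewrite sumrN H // (leq_ltn_trans (leq_pred j) jm).
rewrite H //; rewrite ltn_neqAle jm andbT; apply/eqP => ej.
by move: em; rewrite -ej /= oj.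
Qed.

Definition stdl (w : seq V) :=
  forall i j, (i < size w)%N -> (j < size w)%N -> s w`_i w`_j = stdc i j.

Lemma stdl_rcons w x : stdl w ->
  (forall i, (i < size w)%N -> s w`_i x = stdc i (size w)) -> stdl (rcons w x).
Proof.
move=> hw hx i j; rewrite size_rcons !ltnS => hi hj; rewrite !nth_rcons.
case: (ltngtP i (size w)) hi => // [hi' _|ei _];
  case: (ltngtP j (size w)) hj => // [hj' _|ej _].
- exact: hw.
- by rewrite ej hx.
- by rewrite ei santi hx // stdc_anti opprK.
by rewrite ei ej halt stdc_diag.
Qed.

Lemma stdl_take w k : stdl w -> stdl (take k w).
Proof.
move=> hw i j; rewrite size_take_min => hi hj.
have hi' : (i < size w)%N by apply: (leq_trans hi); apply: geq_minr.
have hj' : (j < size w)%N by apply: (leq_trans hj); apply: geq_minr.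
have hik : (i < k)%N by apply: (leq_trans hi); apply: geq_minl.
have hjk : (j < k)%N by apply: (leq_trans hj); apply: geq_minl.
by rewrite !nth_take // hw.
Qed.

Lemma proj_even w u : stdl w -> ~~ odd (size w) ->
  exists2 p, p \in <<w>>%VS & forall j, (j < size w)%N -> s w`_j (u - p) = 0.
Proof.
move=> hw ew.
pose a i := if odd i then s w`_i.-1 u else - s w`_i.+1 u.
exists (\sum_(i < size w) a i *: w`_i).
  by apply: memv_suml => i _; apply: memvZ; apply: memv_span; apply: mem_nth.
move=> j hj; rewrite sB2 ssum2.
under eq_bigr => i _ do rewrite sZ2 hw //.
rewrite sum_stdc // /a.
case oj: (odd j) => /=.
  by case: j oj {hj} => [|j] //= /negbTE -> /=; rewrite opprK subrr.
by rewrite oj subrr.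
Qed.

Lemma nondeg_even w v : stdl w -> ~~ odd (size w) -> v \in <<w>>%VS ->
  (forall j, (j < size w)%N -> s w`_j v = 0) -> v = 0.
Proof.
move=> hw ew vw hv.
pose c (k : nat) := oapp (fun i : 'I_(size w) => coord (in_tuple w) i v) 0 (insub k).
have ev : v = \sum_(i < size w) c i *: w`_i.
  rewrite {1}(@coord_span _ _ (size w) (in_tuple w) v vw); apply: eq_bigr => i _; by rewrite /c valK.
have hs : forall j, (j < size w)%N -> (if odd j then - c j.-1 else c j.+1) = 0.
  move=> j hj; have := hv j hj; rewrite {1}ev ssum2 => <-.
  rewrite -(@sum_stdc (size w)) //; apply: eq_bigr => i _; by rewrite sZ2 hw.
have cz : forall k, (k < size w)%N -> c k = 0.
  move=> k hk; case ok: (odd k).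
    have hj : (k.-1 < size w)%N by apply: leq_ltn_trans (leq_pred k) hk.
    have := hs _ hj; case: k ok hk hj => [|k] //= /negbTE -> _ _.
    done.
  have hj : (k.+1 < size w)%N.
    rewrite ltn_neqAle hk andbT; apply/eqP => e; by move: ew; rewrite -e /= ok.
  by have := hs _ hj; rewrite /= ok /= => /eqP; rewrite oppr_eq0 => /eqP.
rewrite ev; apply: big1 => i _; by rewrite cz // scale0r.
Qed.


Lemma free_rcons (w : seq V) (e : V) : free (rcons w e) = (e \notin <<w>>%VS) && free w.
Proof.
have pe : perm_eq (rcons w e) (e :: w) by rewrite -cats1 perm_catC.
by rewrite (perm_free pe) free_cons.
Qed.

Lemma span_rcons (w : seq V) (e : V) : <<rcons w e>>%VS = (<<w>> + <[e]>)%VS.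
Proof. by rewrite -cats1 span_cat span_seq1. Qed.

Lemma cap0P (U W : {vspace V}) :
  (forall v, v \in U -> v \in W -> v = 0) -> (U :&: W = 0)%VS.
Proof.
move=> h; apply/eqP; rewrite -subv0; apply/subvP => v.
by rewrite memv_cap memv0 => /andP[a b]; apply/eqP; apply: h.
Qed.

Lemma nth_in (w : seq V) i x : (i < size w)%N -> w`_i = x -> x \in w.
Proof. by move=> hi <-; apply: mem_nth. Qed.

Lemma in_nth (w : seq V) x : x \in w -> exists2 i, (i < size w)%N & w`_i = x.
Proof. by move=> /(nthP 0) [i hi <-]; exists i. Qed.

Lemma append_even (w : seq V) (e : V) : stdl w -> ~~ odd (size w) ->
  (forall j, (j < size w)%N -> s w`_j e = 0) -> stdl (rcons w e).
Proof.
move=> hw ew he; apply: stdl_rcons => // i hi.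
by rewrite he // stdc_even.
Qed.

Lemma good_even (X : {vspace V}) (w : seq V) (e : V) : stdl w -> ~~ odd (size w) -> free w ->
  (<<w>> <= X)%VS -> e \in X -> (forall j, (j < size w)%N -> s w`_j e = 0) ->
  e \notin <<w>>%VS -> e \notin Defs.rad s X ->
  [/\ stdl (rcons w e), free (rcons w e), (<<rcons w e>> <= X)%VS &
      (<<rcons w e>> :&: Defs.rad s X = 0)%VS].
Proof.
move=> hw ew fw wX eX he ew' er; split.
- exact: append_even.
- by rewrite free_rcons ew' fw.
- by rewrite span_rcons subv_add wX -memvE.
apply: cap0P => v; rewrite span_rcons => /memv_addP [a aw [b /vlineP [c ->] ->]].
move=> /memv_rad [_ hv].
have a0 : a = 0.
  apply: (nondeg_even hw ew aw) => j hj.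
  have := hv _ ((subvP wX) _ (memv_span (mem_nth 0 hj))).
  by rewrite sD2 sZ2 he // mulr0 addr0.
move: hv; rewrite a0 add0r => hv.
have [c0|cn0] := eqVneq c 0; first by rewrite c0 scale0r.
case/negP: er; apply/memv_rad; split => // u uX.
by have := hv u uX; rewrite sZ2 => /eqP; rewrite mulf_eq0 (negbTE cn0) /= => /eqP.
Qed.


Definition good (X : {vspace V}) (w : seq V) :=
  [/\ stdl w, free w, (<<w>> <= X)%VS & (<<w>> :&: Defs.rad s X = 0)%VS].

Lemma step_odd (X : {vspace V}) (w : seq V) :
  good X w -> odd (size w) -> exists e, good X (rcons w e).
Proof.
case=> hw fw wX wr ow.
case/lastP: w hw fw wX wr ow => [//|w0 r] hw fw wX wr ow.
have ew0 : ~~ odd (size w0) by move: ow; rewrite size_rcons /=.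
have hw0 : stdl w0.
  by move: (stdl_take (k := size w0) hw); rewrite -cats1 take_size_cat.
have sz : size (rcons w0 r) = (size w0).+1 by rewrite size_rcons.
have nth0 : forall i, (i < size w0)%N -> (rcons w0 r)`_i = w0`_i.
  by move=> i hi; rewrite nth_rcons hi.
have nthr : (rcons w0 r)`_(size w0) = r by rewrite nth_rcons ltnn eqxx.
have r_orth : forall i, (i < size w0)%N -> s w0`_i r = 0.
  move=> i hi; rewrite -nth0 // -{2}nthr hw ?sz //; last exact: (ltn_trans hi).
  exact: stdc_even.
have rw : r \in <<rcons w0 r>>%VS by apply: memv_span; rewrite mem_rcons mem_head.
have rX : r \in X by apply: (subvP wX).
have rnr : r \notin Defs.rad s X.
  apply/negP => rr; have : r \in (<<rcons w0 r>> :&: Defs.rad s X)%VS by rewrite memv_cap rw.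
  rewrite wr memv0 => /eqP r0; move: fw; rewrite free_rcons r0 mem0v //.
have [u uX hu] := not_rad rX rnr.
have [p pw hp] := proj_even u hw0 ew0.
have w0w : (<<w0>> <= <<rcons w0 r>>)%VS by rewrite span_rcons addvSl.
have pX : p \in X by apply: (subvP wX); apply: (subvP w0w).
set y := u - p.
have yX : y \in X by rewrite memvB.
have syr : s y r != 0.
  rewrite /y sB1 (@orth1 w0 r p) ?subr0 // => x /in_nth [i hi <-].
  exact: r_orth.
have sry : s r y != 0 by rewrite santi oppr_eq0.
exists ((s r y)^-1 *: y).
set e := (s r y)^-1 *: y.
have sre : s r e = 1 by rewrite sZ2 mulVf.
have e_orth : forall i, (i < size w0)%N -> s w0`_i e = 0.
  by move=> i hi; rewrite sZ2 hp // mulr0.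
have hstd : stdl (rcons (rcons w0 r) e).
  apply: stdl_rcons => // i; rewrite sz ltnS leq_eqVlt => /orP [/eqP ->|hi].
    by rewrite nthr sre /stdc (negbTE ew0) eqxx.
  by rewrite nth0 // e_orth // stdc_low.
have ev : ~~ odd (size (rcons (rcons w0 r) e)) by rewrite !size_rcons /= ?negbK ?(negbTE ew0).
split => //.
- rewrite free_rcons fw andbT; apply/negP => ew.
  move: sre; rewrite (@orth2 (rcons w0 r) r e) // => [/eqP|x].
    by rewrite eq_sym oner_eq0.
  rewrite mem_rcons in_cons => /orP [/eqP ->|/in_nth [i hi <-]]; first exact: halt.
  by rewrite santi r_orth // oppr0.
- by rewrite span_rcons subv_add wX -memvE memvZ.
apply: cap0P => v vw /memv_rad [_ hv].
apply: (nondeg_even hstd ev vw) => j hj; apply: hv.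
apply: (subvP (_ : <<rcons (rcons w0 r) e>> <= X)%VS); last exact: memv_span (mem_nth 0 hj).
by rewrite span_rcons subv_add wX -memvE memvZ.
Qed.


Lemma proj_out (X : {vspace V}) (w : seq V) (U : {vspace V}) :
  stdl w -> ~~ odd (size w) -> (<<w>> <= U)%VS -> (<<w>> <= X)%VS -> ~~ (X <= U)%VS ->
  exists y, [/\ y \in X, y \notin U & forall j, (j < size w)%N -> s w`_j y = 0].
Proof.
move=> hw ew wU wX /subvPn [x xX xU].
have [p pw hp] := proj_even x hw ew.
exists (x - p); split => //; first by rewrite memvB // (subvP wX).
apply/negP => h; case/negP: xU.
by rewrite -(subrK p x) memvD // (subvP wU).
Qed.

Lemma step_even (X : {vspace V}) (w : seq V) :
  (\dim (Defs.rad s X) <= 1)%N ->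
  good X w -> ~~ odd (size w) -> ~~ (X <= <<w>>)%VS ->
  exists e, good X (rcons w e) \/
    [/\ stdl (rcons w e), free (rcons w e) & <<rcons w e>>%VS = X].
Proof.
move=> hr [hw fw wX wr] ew Xw.
have [y [yX yw hy]] := proj_out hw ew (subvv _) wX Xw.
case: (boolP (y \in Defs.rad s X)) => yr; last first.
  by exists y; left; have [] := good_even hw ew fw wX yX hy yw yr.
have hstd := append_even hw ew hy.
have hfree : free (rcons w y) by rewrite free_rcons yw fw.
have wyX : (<<rcons w y>> <= X)%VS by rewrite span_rcons subv_add wX -memvE.
case: (boolP (X <= <<rcons w y>>)%VS) => Xwy.
  by exists y; right; split => //; apply/eqP; rewrite eqEsubv wyX.
have wwy : (<<w>> <= <<rcons w y>>)%VS by rewrite span_rcons addvSl.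
have [y2 [y2X y2w hy2]] := proj_out hw ew wwy wX Xwy.
exists y2; left.
have y2w' : y2 \notin <<w>>%VS by apply: contra y2w; apply: (subvP wwy).
have y2r : y2 \notin Defs.rad s X.
  apply: contra y2w => y2r.
  have sub : (<[y]> <= Defs.rad s X)%VS by rewrite -memvE.
  have y0 : y != 0 by apply: contraNneq yw => ->; rewrite mem0v.
  have eq : <[y]>%VS = Defs.rad s X.
    have d1 := dimvS sub; rewrite dim_vline y0 in d1.
    apply/eqP; rewrite -(dimv_leqif_eq sub).2 dim_vline y0.
    by rewrite eqn_leq d1 /=; exact: hr.
  by rewrite span_rcons (subvP (addvSr _ _)) // eq.
by have [] := good_even hw ew fw wX y2X hy2 y2w' y2r.
Qed.


Lemma extend (X : {vspace V}) : (\dim (Defs.rad s X) <= 1)%N ->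
  forall w, good X w ->
  exists w', [/\ stdl (w ++ w'), free (w ++ w') & <<w ++ w'>>%VS = X].
Proof.
move=> hr w gw.
suff H : forall k w, (\dim X - size w <= k)%N -> good X w ->
  exists w', [/\ stdl (w ++ w'), free (w ++ w') & <<w ++ w'>>%VS = X].
  exact: (H _ w (leqnn _) gw).
elim=> [|k IH] {gw}w hk gw; have [hw fw wX wr] := gw;
  (case: (boolP (X <= <<w>>)%VS) => Xw;
    [by exists [::]; rewrite cats0; split => //; apply/eqP; rewrite eqEsubv wX Xw|]).
  have dw : \dim <<w>> = size w by apply/eqP.
  move: hk; rewrite leqn0 subn_eq0 -dw => hk.
  have := (dimv_leqif_sup wX).2; rewrite eqn_leq hk dimvS //= => /esym Xw'.
  by rewrite Xw' in Xw.
have [e He] : exists e, good X (rcons w e) \/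
    [/\ stdl (rcons w e), free (rcons w e) & <<rcons w e>>%VS = X].
  case: (boolP (odd (size w))) => ow.
    by have [e ge] := step_odd gw ow; exists e; left.
  exact: step_even.
case: He => [ge|[a b c]]; last by exists [:: e]; rewrite cats1.
have hk' : (\dim X - size (rcons w e) <= k)%N.
  by rewrite size_rcons subnS; move: hk; case: (\dim X - size w)%N => // m.
have [w' [a b c]] := IH _ hk' ge.
by exists (e :: w'); rewrite -cat_rcons.
Qed.


Lemma incident_sym (A B : {vspace V}) : incident s A B -> incident s B A.
Proof. by case=> [->|[h|h]]; [left|right; right|right; left]. Qed.

Lemma incident_lt (A B : {vspace V}) : incident s A B -> (\dim A < \dim B)%N ->
  (A <= B)%VS /\ (A :&: Defs.rad s B = 0)%VS.
Proof.
case=> [->|[h|[h _]]]; first by rewrite ltnn.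
  by [].
by move=> lt; move: (dimvS h); rewrite leqNgt lt.
Qed.

Lemma adapted (n : nat) (T : pred nat) (X : nat -> {vspace V}) :
  \dim (fullv : {vspace V}) = n -> maximal_rank s ->
  (forall t, T t -> in_I n t) ->
  (forall t, T t -> is_object s t (X t)) ->
  (forall t u, T t -> T u -> incident s (X t) (X u)) ->
  exists b : seq V, [/\ stdl b, free b, size b = n &
     forall t, T t -> <<take t b>>%VS = X t].
Proof.
move=> hn hmax hT hobj hinc.
pose T' t := T t || (t == n).
pose X' t := if t == n then fullv else X t.
have dimX' : forall t, T' t -> \dim (X' t) = t.
  move=> t; rewrite /T' /X'; case: eqP => [->|_]; first by rewrite hn.
  by rewrite orbF => Tt; case: (hobj t Tt).
have radX' : forall t, T' t -> (\dim (Defs.rad s (X' t)) <= 1)%N.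
  move=> t; rewrite /T' /X'; case: eqP => [->|_]; first by move=> _; exact: hmax.
  by rewrite orbF => Tt; case: (hobj t Tt) => _ [].
have ltX' : forall t u, T' t -> T' u -> (t < u)%N ->
    (X' t <= X' u)%VS /\ (X' t :&: Defs.rad s (X' u) = 0)%VS.
  move=> t u Tt Tu tu.
  have tn : t != n.
    apply/negP => /eqP e; move: Tu; rewrite /T' => /orP [/hT|/eqP ue].
      by rewrite /in_I -e => /andP [_ h]; move: (ltn_trans tu h); rewrite ltnn.
    by move: tu; rewrite e ue ltnn.
  have Tt' : T t by move: Tt; rewrite /T' (negbTE tn) orbF.
  case: (eqVneq u n) => [un|un].
    rewrite /X' un eqxx (negbTE tn) subvf; split => //.
    by have [_ [h _]] := hobj t Tt'.
  have Tu' : T u by move: Tu; rewrite /T' (negbTE un) orbF.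
  rewrite /X' (negbTE tn) (negbTE un); apply: incident_lt; first exact: hinc.
  by have [-> _] := hobj t Tt'; have [-> _] := hobj u Tu'.
suff H : forall m, (m <= n)%N -> exists w : seq V, [/\ stdl w, free w,
   (forall t, T' t -> (t <= m)%N -> <<take t w>>%VS = X' t /\ (t <= size w)%N) &
   (forall t, T' t -> (m < t)%N -> (<<w>> <= X' t)%VS /\ (<<w>> :&: Defs.rad s (X' t) = 0)%VS)].
  have [w [hw fw h1 _]] := H n (leqnn n).
  have Tn : T' n by rewrite /T' eqxx orbT.
  have [e1 e2] := h1 n Tn (leqnn n).
  have sw : size w = n.
    apply/eqP; rewrite eqn_leq e2 andbT.
    by move: fw; rewrite /free => /eqP <-; rewrite -hn dimvS // subvf.
  exists w; split => // t Tt.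
  have Tt' : T' t by rewrite /T' Tt.
  have tn : t != n by apply/negP => /eqP e; move: (hT t Tt); rewrite /in_I e ltnn andbF.
  have tn' : (t <= n)%N by move: (hT t Tt); rewrite /in_I => /andP [_ /ltnW].
  by have [-> _] := h1 t Tt' tn'; rewrite /X' (negbTE tn).
elim=> [|m IH] hm.
  exists [::]; split => //.
  - exact: nil_free.
  - move=> t Tt; rewrite leqn0 => /eqP t0; subst t; split => //.
    have := dimX' 0 Tt; move/eqP; rewrite dimv_eq0 => /eqP ->; by rewrite take0 span_nil.
  by move=> t Tt _; rewrite span_nil sub0v cap0v.
have [w [hw fw h1 h2]] := IH (ltnW hm).
case: (boolP (T' m.+1)) => Tm; last first.
  exists w; split => // t Tt tm.
    apply: h1 => //; move: tm; rewrite leq_eqVlt => /orP [/eqP e|//].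
    by move: Tm; rewrite -e Tt.
  by apply: h2 => //; apply: ltnW.
have [wX wr] := h2 _ Tm (ltnSn m).
have [w' [hw' fw' ew']] := extend (radX' _ Tm) (w := w) (And4 hw fw wX wr).
have sz : size (w ++ w') = m.+1.
  by move: fw'; rewrite /free ew' dimX' // => /eqP.
exists (w ++ w'); split => //.
  move=> t Tt; rewrite leq_eqVlt => /orP [/eqP ->|tm].
    by rewrite -sz take_size ew' sz.
  have [e1 e2] := h1 t Tt tm.
  by rewrite takel_cat // e1 size_cat (leq_trans e2) // leq_addr.
move=> t Tt tm; rewrite ew'; exact: ltX'.
Qed.


Lemma bil_std (x : seq V) m (c d : 'I_m -> F) : stdl x -> size x = m ->
  s (\sum_(i < m) c i *: x`_i) (\sum_(j < m) d j *: x`_j) =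
  \sum_(i < m) \sum_(j < m) c i * d j * stdc i j.
Proof.
move=> hx sx; rewrite ssum1; apply: eq_bigr => i _.
rewrite sZ1 ssum2 mulr_sumr; apply: eq_bigr => j _.
by rewrite sZ2 hx ?sx // mulrA.
Qed.

Lemma iso_exists n (b1 b2 : seq V) : stdl b1 -> stdl b2 -> free b1 -> free b2 ->
  size b1 = n -> size b2 = n -> \dim (fullv : {vspace V}) = n ->
  exists g : 'End(V), in_Sp s g /\
    forall t, (g @: <<take t b1>> = <<take t b2>>)%VS.
Proof.
move=> h1 h2 f1 f2 s1 s2 hn.
have [f hf] := linear_of_free b1 b2.
have mf := hf f1 (etrans s2 (esym s1)).
pose g : 'End(V) := linfun f.
have mg : map g b1 = b2 by rewrite -mf; apply: eq_map => x; rewrite lfunE.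
have full : forall b : seq V, free b -> size b = n -> <<b>>%VS = fullv.
  move=> b fb sb; apply/eqP; rewrite -(dimv_leqif_eq (subvf _)).2.
  by move: fb; rewrite /free sb hn.
have gb : forall i : 'I_(size b1), g b1`_i = b2`_i.
  by move=> i; rewrite -mg (nth_map 0).
exists g; split; last first.
  by move=> t; rewrite limg_span map_take mg.
split; first by rewrite -{1}(full b1) // limg_span mg full.
move=> u v.
have ub : u \in <<in_tuple b1>>%VS by rewrite full ?memvf.
have vb : v \in <<in_tuple b1>>%VS by rewrite full ?memvf.
have gexp : forall w, w \in <<in_tuple b1>>%VS ->
    g w = \sum_(i < size b1) coord (in_tuple b1) i w *: b2`_i.
  move=> w wb; rewrite {1}(coord_span wb) linear_sum.
  by apply: eq_bigr => i _; rewrite linearZ /= gb.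
rewrite (gexp u ub) (gexp v vb) [in RHS](coord_span ub) [in RHS](coord_span vb).
have s21 : size b2 = size b1 by rewrite s1 s2.
by rewrite (bil_std _ _ h2 s21) (@bil_std (in_tuple b1) (size b1) _ _ h1 (erefl _)).
Qed.

End Sym.

Theorem corollary5p4 (F : fieldType) (V : vectType F) (n : nat)
    (s : 'Hom(V, 'Hom(V, F^o)))
    (hn : \dim (fullv : {vspace V}) = n)
    (halt : alternating_form s)
    (hmax : maximal_rank s)
    (C : nat -> {vspace V}) (hC : chamber s n C)
    (J : pred nat) (hJ : forall j, J j -> in_I n j) :
  flag_transitive s n C J.
Proof.
move=> K KJ Fl1 Fl2 hF1 hF2.
have [hCo hCi] := hC.
pose T t := (in_I n t && ~~ J t) || K t.
have hT : forall t, T t -> in_I n t.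
  by move=> t /orP [/andP [] //| /KJ /hJ].
have nK : forall t, T t -> ~~ K t -> in_I n t && ~~ J t.
  by move=> t /orP [//|->].
pose X (Fl : nat -> {vspace V}) t := if K t then Fl t else C t.
have obj : forall Fl, residue_flag s n C J K Fl ->
    forall t, T t -> is_object s t (X Fl t).
  move=> Fl [o _] t Tt; rewrite /X; case Kt: (K t); first by case: (o t Kt).
  by apply: hCo; apply: hT.
have inc : forall Fl, residue_flag s n C J K Fl ->
    forall t u, T t -> T u -> incident s (X Fl t) (X Fl u).
  move=> Fl [o i] t u Tt Tu; rewrite /X.
  case Kt: (K t); case Ku: (K u).
  - exact: i.
  - have /andP [Iu Ju] := nK u Tu (negbT Ku).
    by have [_ [_ /(_ u Iu Ju) []]] := o t Kt.
  - have /andP [It Jt] := nK t Tt (negbT Kt).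
    by apply: incident_sym; have [_ [_ /(_ t It Jt) []]] := o u Ku.
  - have /andP [It _] := nK t Tt (negbT Kt).
    have /andP [Iu _] := nK u Tu (negbT Ku).
    exact: hCi.
have [b1 [h1 f1 s1 e1]] := adapted halt hn hmax hT (obj _ hF1) (inc _ hF1).
have [b2 [h2 f2 s2 e2]] := adapted halt hn hmax hT (obj _ hF2) (inc _ hF2).
have [g [gS gt]] := iso_exists h1 h2 f1 f2 s1 s2 hn.
have key : forall t, T t -> (g @: X Fl1 t)%VS = X Fl2 t.
  by move=> t Tt; rewrite -e1 // -e2 // gt.
exists g; split; first split => //.
  move=> i Ii Ji.
  have Ki : K i = false by apply/negP => /KJ; rewrite (negbTE Ji).
  have Ti : T i by rewrite /T Ii Ji.
  by have := key i Ti; rewrite /X Ki.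
move=> k Kk; have Tk : T k by rewrite /T Kk orbT.
by have := key k Tk; rewrite /X Kk.
Qed.
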